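(* Every von Neumann regular commutative ring $\mathbf A$ is an amalgamation base for $\mathsf{RCR}$: for all $\mathbf B,\mathbf C\in\mathsf{RCR}$ and ring embeddings $h_1:\mathbf A\to\mathbf B$, $h_2:\mathbf A\to\mathbf C$, there exist $\mathbf D\in\mathsf{RCR}$ and ring embeddings $g_1:\mathbf B\to\mathbf D$, $g_2:\mathbf C\to\mathbf D$ with $g_1\circ h_1=g_2\circ h_2$.
   Context: Rings are unital. $\mathsf{RCR}$ is the class of reduced commutative rings (no nonzero nilpotents). A commutative ring $\mathbf A$ is (von Neumann) regular if for every $a\in A$ there is $b\in A$ with $a=a^2b$. *)

(* Defs.v *)
From HB Require Import structures.
From mathcomp Require Import all_boot all_algebra.
Set Implicit Arguments. Unset Strict Implicit. Unset Printing Implicit Defensive.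
Import GRing.Theory.
Local Open Scope ring_scope.

Definition reduced (R : comPzRingType) : Prop :=
  forall (x : R) (n : nat), x ^+ n = 0 -> x = 0.

Definition vn_regular (R : comPzRingType) : Prop :=
  forall a : R, exists b : R, a = a ^+ 2 * b.

(* Main.v *)
Require Import Defs.
From HB Require Import structures.
From mathcomp Require Import all_boot all_algebra.
From mathcomp Require Import boolp classical_sets ring zify.
Set Implicit Arguments. Unset Strict Implicit. Unset Printing Implicit Defensive.
Import GRing.Theory.
Local Open Scope ring_scope.
Local Open Scope quotient_scope.

Section Gen.
Variables (A X Y : comPzRingType) (k1 : {rmorphism A -> X}) (k2 : {rmorphism A -> Y}).

Definition isideal (N : X -> Prop) :=
  [/\ N 0, (forall x y, N x -> N y -> N (x - y)) & (forall a x, N x -> N (a * x))].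

Lemma ideal_add N x y : isideal N -> N x -> N y -> N (x + y).
Proof.
case=> h0 hB _ hx hy; have := hB _ _ hx (hB _ _ h0 hy).
by rewrite sub0r opprK.
Qed.

Lemma ideal_opp N x : isideal N -> N x -> N (- x).
Proof. by case=> h0 hB _ hx; have := hB _ _ h0 hx; rewrite sub0r. Qed.

Lemma ideal_sum (I : eqType) N (s : seq I) (F : I -> X) : isideal N ->
  (forall i, i \in s -> N (F i)) -> N (\sum_(i <- s) F i).
Proof.
move=> hN; elim: s => [|i s IH] hs; first by rewrite big_nil; case: hN.
rewrite big_cons; apply: ideal_add => //; first by apply: hs; rewrite inE eqxx.
by apply: IH => j hj; apply: hs; rewrite inE hj orbT.
Qed.

Definition adm (N : X -> Prop) (f : Y -> X) :=
  [/\ isideal N, (forall y z, N (f (y + z) - f y - f z))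
    & (forall a y, N (f (k2 a * y) - k1 a * f y))].

Definition ev (f : Y -> X) (s : seq (X * Y)) : X := \sum_(p <- s) p.1 * f p.2.

Definition R1 (s t : seq (X * Y)) :=
  forall N f, adm N f -> N (ev f s - ev f t).

Lemma R1_exact s t : (forall f, ev f s = ev f t) -> R1 s t.
Proof. by move=> h N f [[h0 _ _] _ _]; rewrite h subrr. Qed.

Lemma R1_refl s : R1 s s.
Proof. exact: R1_exact. Qed.

Lemma R1_sym s t : R1 s t -> R1 t s.
Proof.
by move=> h N f hf; rewrite -opprB; apply: ideal_opp (h N f hf); case: hf.
Qed.

Lemma R1_trans s t u : R1 s t -> R1 t u -> R1 s u.
Proof.
move=> h1 h2 N f hf; have hN : isideal N by case: hf.
have := ideal_add hN (h1 N f hf) (h2 N f hf).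
by rewrite addrA subrK.
Qed.

Lemma ev_cat f s t : ev f (s ++ t) = ev f s + ev f t.
Proof. by rewrite /ev big_cat. Qed.

Definition nfst (s : seq (X * Y)) := map (fun p => (- p.1, p.2)) s.
Definition nsnd (s : seq (X * Y)) := map (fun p => (p.1, - p.2)) s.
Definition tmul (s t : seq (X * Y)) :=
  [seq (p.1 * q.1, p.2 * q.2) | p <- s, q <- t].

Lemma ev_nfst f s : ev f (nfst s) = - ev f s.
Proof. by rewrite /ev big_map /= -sumrN; apply: eq_bigr => p _; rewrite mulNr. Qed.

Lemma ev_tmul f s t : ev f (tmul s t) =
  \sum_(p <- s) \sum_(q <- t) (p.1 * q.1) * f (p.2 * q.2).
Proof.
elim: s => [|p s IH]; first by rewrite /ev !big_nil.
by rewrite /tmul allpairs_cons ev_cat IH big_cons /ev big_map.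
Qed.

Lemma R1_cat s s' t t' : R1 s s' -> R1 t t' -> R1 (s ++ t) (s' ++ t').
Proof.
move=> h1 h2 N f hf; have hN : isideal N by case: hf.
rewrite !ev_cat opprD addrACA; exact: ideal_add (h1 N f hf) (h2 N f hf).
Qed.

Lemma R1_nfst s t : R1 s t -> R1 (nfst s) (nfst t).
Proof.
move=> h N f hf; have hN : isideal N by case: hf.
rewrite !ev_nfst -opprD; exact: ideal_opp (h N f hf).
Qed.

Lemma adm_f0 N f : adm N f -> N (f 0).
Proof.
case=> hN hD _; have := ideal_opp hN (hD 0 0).
by rewrite addr0 subrr sub0r opprK.
Qed.

Lemma adm_fN N f y : adm N f -> N (f (- y) + f y).
Proof.
move=> hf; have h0 := adm_f0 hf; case: hf => hN hD _.
have := hD y (- y); rewrite subrr => h.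
case: hN => _ hB _; have := hB _ _ h0 h.
suff -> : f 0 - (f 0 - f y - f (- y)) = f (- y) + f y by [].
by ring.
Qed.

Lemma R1_nsnd s : R1 (nsnd s) (nfst s).
Proof.
move=> N f hf; have hN : isideal N by case: hf.
rewrite ev_nfst opprK /ev big_map /= -big_split /=.
apply: (ideal_sum hN) => p _; rewrite -mulrDr.
by case: hN => _ _ hM; apply: hM; exact: adm_fN hf.
Qed.

Lemma adm_shift N f c : adm N f -> adm N (fun y => f (c * y)).
Proof.
case=> hN hD hS; split => // [y z|a y]; first by rewrite mulrDr.
by rewrite mulrCA.
Qed.

Lemma ev_tmul_r f s t :
  ev f (tmul s t) = \sum_(q <- t) q.1 * ev (fun y => f (q.2 * y)) s.
Proof.
rewrite ev_tmul exchange_big /=; apply: eq_bigr => q _.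
rewrite /ev mulr_sumr; apply: eq_bigr => p _.
by rewrite [p.2 * _]mulrC; ring.
Qed.

Lemma R1_tmul s s' t : R1 s s' -> R1 (tmul s t) (tmul s' t).
Proof.
move=> h N f hf; have hN : isideal N by case: hf.
rewrite !ev_tmul_r -sumrB; apply: (ideal_sum hN) => q _.
rewrite -mulrBr; case: hN => _ _ hM; apply: hM.
exact: h (adm_shift _ hf).
Qed.

Lemma ev_tmulC f s t : ev f (tmul s t) = ev f (tmul t s).
Proof.
rewrite !ev_tmul exchange_big /=; apply: eq_bigr => q _; apply: eq_bigr => p _.
by rewrite [p.1 * _]mulrC [p.2 * _]mulrC.
Qed.

Lemma ev_tmulA f s t u : ev f (tmul (tmul s t) u) = ev f (tmul s (tmul t u)).
Proof.
rewrite ev_tmul.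
have -> : \sum_(p <- tmul s t) \sum_(q <- u) p.1 * q.1 * f (p.2 * q.2) =
   \sum_(p <- s) \sum_(q <- t) \sum_(r <- u) p.1 * q.1 * r.1 * f (p.2 * q.2 * r.2).
  elim: s => [|p s IH]; first by rewrite !big_nil.
  by rewrite /tmul allpairs_cons big_cat IH big_cons big_map.
rewrite ev_tmul; apply: eq_bigr => p _.
elim: t => [|q t IH]; first by rewrite !big_nil.
rewrite /tmul allpairs_cons big_cat big_cons big_map IH; congr (_ + _).
by apply: eq_bigr => r _ /=; rewrite !mulrA.
Qed.

Lemma ev_tmul1 f s : ev f (tmul [:: (1, 1)] s) = ev f s.
Proof. by rewrite /tmul allpairs_cons cats0 /ev big_map; apply: eq_bigr => p _ /=; rewrite !mul1r. Qed.

Lemma tmul_catl s t u : tmul (s ++ t) u = tmul s u ++ tmul t u.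
Proof. exact: allpairs_cat. Qed.

End Gen.

Definition swap (X Y : Type) (s : seq (X * Y)) : seq (Y * X) := map (fun p => (p.2, p.1)) s.

Lemma swap_cat (X Y : Type) (s t : seq (X * Y)) : swap (s ++ t) = swap s ++ swap t.
Proof. exact: map_cat. Qed.

Lemma swap_tmul (X Y : comPzRingType) (s t : seq (X * Y)) : swap (tmul s t) = tmul (swap s) (swap t).
Proof.
elim: s => [|p s IH] //.
rewrite /tmul allpairs_cons swap_cat -/(tmul s t) IH /=.
congr (_ ++ _).
by rewrite /swap -!map_comp; apply: eq_map => q.
Qed.

Lemma swap_nfst (X Y : comPzRingType) (s : seq (X * Y)) : swap (nfst s) = nsnd (swap s).
Proof. by rewrite /swap /nfst /nsnd -!map_comp. Qed.

Lemma zorn_pred (T : Type) (P : (T -> Prop) -> Prop) (J0 : T -> Prop) :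
  P J0 ->
  (forall F : (T -> Prop) -> Prop, (forall J, F J -> P J) ->
     (forall J K, F J -> F K -> (forall t, J t -> K t) \/ (forall t, K t -> J t)) ->
     (exists J, F J) -> P (fun t => exists J, F J /\ J t)) ->
  exists M, [/\ P M, (forall t, J0 t -> M t) &
     forall K, P K -> (forall t, M t -> K t) -> forall t, K t -> M t].
Proof.
move=> PJ0 hch.
pose T' := {J : T -> Prop | P J /\ forall t, J0 t -> J t}.
pose R (a b : T') := `[< forall t, sval a t -> sval b t >].
have [] := @Zorn T' R.
- by move=> a; apply/asboolP.
- by move=> a b c /asboolP h1 /asboolP h2; apply/asboolP => t /h1 /h2.
- move=> [a ha] [b hb] /asboolP /= h1 /asboolP /= h2.
  have eab : a = b by apply: funext => t; apply: propext; split; [exact: h1|exact: h2].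
  by subst b; congr exist; apply: Prop_irrelevance.
- move=> Ch htot.
  have [[a0 ha0]|nCh] := pselect (exists a, Ch a).
    pose F := fun J => exists a, Ch a /\ J = sval a.
    have PF : P (fun t => exists J, F J /\ J t).
      apply: hch.
      - by move=> J [a [_ ->]]; case: (svalP a).
      - move=> J K [a [ha ->]] [b [hb ->]].
        by case: (htot a b ha hb) => /asboolP h; [left|right].
      - by exists (sval a0); exists a0.
    have J0F : forall t, J0 t -> exists J, F J /\ J t.
      move=> t ht; exists (sval a0); split; first by exists a0.
      by case: (svalP a0) => _; apply.
    exists (exist (fun J => P J /\ forall t, J0 t -> J t) _ (conj PF J0F)) => a ha; apply/asboolP => t hat /=.
    by exists (sval a); split => //; exists a.
  exists (exist (fun J => P J /\ forall t, J0 t -> J t) J0 (conj PJ0 (fun t h => h))) => a ha.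
  by exfalso; apply: nCh; exists a.
- move=> [M [PM J0M]] hmax; exists M; split => // K PK MK.
  have J0K : forall t, J0 t -> K t by move=> t /J0M /MK.
  have := hmax (exist (fun J => P J /\ forall t, J0 t -> J t) K (conj PK J0K)).
  move=> h; have : exist (fun J => P J /\ forall t, J0 t -> J t) K (conj PK J0K) = exist _ M (conj PM J0M).
    by apply: h; apply/asboolP.
  by case=> ->.
Qed.

Section Ext.
Variables (A Z : comPzRingType) (k : {rmorphism A -> Z}).

Definition ext (m : A -> Prop) (z : Z) :=
  exists s : seq (A * Z), (forall p, p \in s -> m p.1) /\ z = \sum_(p <- s) k p.1 * p.2.

Lemma ext_ideal m : isideal (ext m).
Proof.
split.
- by exists [::]; rewrite big_nil.
- move=> x y [s [hs ->]] [t [ht ->]].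
  exists (s ++ map (fun p => (p.1, - p.2)) t); split.
    move=> p; rewrite mem_cat => /orP [/hs //|/mapP [q /ht hq ->]] //.
  by rewrite big_cat big_map /= -sumrN; congr (_ + _); apply: eq_bigr => q _; rewrite mulrN.
- move=> a x [s [hs ->]]; exists (map (fun p => (p.1, a * p.2)) s); split.
    by move=> p /mapP [q /hs hq ->].
  by rewrite big_map mulr_sumr; apply: eq_bigr => q _ /=; rewrite mulrCA.
Qed.

Lemma ext_gen m a z : m a -> ext m (k a * z).
Proof.
move=> ha; exists [:: (a, z)]; split; first by move=> p; rewrite inE => /eqP ->.
by rewrite big_seq1.
Qed.

Lemma ext_split (m : A -> Prop) e x : e * e = e -> isideal m ->
  ext (fun t => exists u c, m u /\ t = u + e * c) x -> ext m (x * k (1 - e)).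
Proof.
move=> he hm [s [hs ->]]; rewrite mulr_suml.
apply: (ideal_sum (ext_ideal m)) => p /hs [u [c [hu ->]]].
have h0 : k e * k (1 - e) = 0 by rewrite -rmorphM mulrBr mulr1 he subrr rmorph0.
have -> : k (u + e * c) * p.2 * k (1 - e) = k u * (p.2 * k (1 - e)) + k c * p.2 * (k e * k (1 - e)).
  by rewrite rmorphD rmorphM; ring.
rewrite h0 mulr0 addr0; exact: ext_gen.
Qed.

End Ext.

Section Regular.
Variables (A X : comPzRingType) (k1 : {rmorphism A -> X}).
Hypothesis hA : vn_regular A.

Lemma reg_idem a : exists e c : A, [/\ e * e = e, a * e = a & e = a * c].
Proof.
have [b hb] := hA a; exists (a * b), b; split => //.
  by rewrite mulrACA -expr2 mulrA -hb.
by rewrite mulrA -expr2 -hb.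
Qed.

Definition idplus (m : A -> Prop) e := fun t => exists u c, m u /\ t = u + e * c.

Lemma idplus_ideal m e : isideal m -> isideal (idplus m e).
Proof.
case=> h0 hB hM; split.
- by exists 0, 0; split => //; rewrite mulr0 addr0.
- move=> x y [u [c [hu ->]]] [u' [c' [hu' ->]]]; exists (u - u'), (c - c'); split.
    exact: hB.
  by ring.
- move=> a x [u [c [hu ->]]]; exists (a * u), (a * c); split; first exact: hM.
  by ring.
Qed.

Lemma maxm x : x != 0 -> exists m : A -> Prop,
  [/\ isideal m, ~ ext k1 m x & forall a, ~ m a -> exists a', m (1 - a * a')].
Proof.
move=> x0.
pose P := fun J : A -> Prop => isideal J /\ ~ ext k1 J x.
have hz := @zorn_pred A P (fun a => a = 0).
have [||M [[hM nM] _ maxM]] := hz.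
- split; first split.
  + by [].
  + by move=> a b -> ->; rewrite subr0.
  + by move=> a b ->; rewrite mulr0.
  move=> [s [hs hx]]; move/eqP: x0; apply; rewrite hx big1_seq // => p /= /hs ->.
  by rewrite rmorph0 mul0r.
- move=> F hF htot [J0 FJ0]; split; first split.
  + by exists J0; split => //; case: (hF _ FJ0) => [[]].
  + move=> a b [J [FJ Ja]] [K [FK Kb]].
    case: (htot _ _ FJ FK) => sub.
      by exists K; split => //; case: (hF _ FK) => [[_ hB _] _]; apply: hB => //; apply: sub.
    by exists J; split => //; case: (hF _ FJ) => [[_ hB _] _]; apply: hB => //; apply: sub.
  + move=> a b [J [FJ Jb]]; exists J; split => //.
    by case: (hF _ FJ) => [[_ _ hM] _]; apply: hM.
  move=> [s [hs hx]].
  have : exists J, F J /\ forall p, p \in s -> J p.1.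
    elim: s hs {hx} => [|p s IH] hs; first by exists J0.
    have [J [FJ hJ]] := IH (fun q hq => hs q (@mem_behead _ (p :: s) _ hq)).
    have [K [FK Kp]] := hs p (mem_head _ _).
    case: (htot _ _ FJ FK) => sub.
      exists K; split => // q; rewrite inE => /orP [/eqP -> //|/hJ]; exact: sub.
    exists J; split => // q; rewrite inE => /orP [/eqP -> |/hJ //]; exact: sub.
  move=> [J [FJ hJ]]; case: (hF _ FJ) => _; apply.
  by exists s; split.
exists M; split => // a na.
have [e [c [he hae hec]]] := reg_idem a.
have key : forall f, f * f = f -> ~ M f -> ext k1 (idplus M f) x.
  move=> f hf nf; apply: contrapT => hn.
  have := maxM (idplus M f) (conj (idplus_ideal f hM) hn).
  have sub : forall t, M t -> idplus M f t.
    by move=> t ht; exists t, 0; split => //; rewrite mulr0 addr0.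
  move=> /(_ sub f) h; apply: nf; apply: h; exists 0, 1; split; last by ring.
  by case: hM.
have ne : ~ M e.
  move=> Me; apply: na; rewrite -hae; case: hM => _ _ h; exact: h _ _ Me.
have [M1e|nM1e] := pselect (M (1 - e)); first by exists c; rewrite -hec.
exfalso; apply: nM.
have h1 := ext_split he hM (key e he ne).
have he' : (1 - e) * (1 - e) = 1 - e.
  by rewrite mulrBr mulr1 mulrBl mul1r he subrr subr0.
have h2 := ext_split he' hM (key _ he' nM1e).
have := ideal_add (ext_ideal k1 M) h1 h2.
by rewrite -mulrDr -rmorphD (_ : (1 - e) + (1 - (1 - e)) = 1) ?rmorph1 ?mulr1 //; ring.
Qed.

End Regular.

Section FL.
Variables (A X Y : comPzRingType) (k1 : {rmorphism A -> X}) (k2 : {rmorphism A -> Y}).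
Hypothesis hA : vn_regular A.
Hypothesis inj2 : injective k2.

Lemma cover (m : A -> Prop) (s : seq (A * Y)) : isideal m ->
  (forall p, p \in s -> m p.1) -> exists e, m e /\ forall p, p \in s -> p.1 * e = p.1.
Proof.
move=> hm0; have [h0 hB hM] := hm0; elim: s => [|p s IH] hs; first by exists 0.
have [e [me he]] := IH (fun q hq => hs q (@mem_behead _ (p :: s) _ hq)).
have [f [c [hf hpf hfc]]] := reg_idem hA p.1.
have mf : m f by rewrite hfc mulrC; apply: (hM); apply: hs; exact: mem_head.
exists (e + f - e * f); split.
  apply: (hB); last by apply: (hM).
  exact: ideal_add hm0 me mf.
move=> q; rewrite inE => /orP [/eqP ->|/he hq].
  by rewrite mulrBr mulrDr hpf mulrA [p.1 * e]mulrC -mulrA hpf; ring.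
by rewrite mulrBr mulrDr mulrA hq; ring.
Qed.

Lemma extY_A (m : A -> Prop) a : isideal m -> ext k2 m (k2 a) -> m a.
Proof.
move=> hm [s [hs hx]]; have [e [me he]] := cover hm hs.
have : k2 a = k2 e * k2 a.
  rewrite hx mulr_sumr; apply: eq_big_seq => p /he hp.
  by rewrite mulrA -rmorphM [e * _]mulrC hp.
rewrite -rmorphM => /inj2 ->.
by rewrite mulrC; case: hm => _ _ h; exact: h _ _ me.
Qed.

Lemma FL x : x != 0 -> exists N f, adm k1 k2 N f /\ ~ N (x * f 1).
Proof.
move=> x0; have [m [hm nmx fl]] := maxm k1 hA x0.
pose NX := ext k1 m; pose NY := ext k2 m.
have iX : isideal NX := ext_ideal k1 m.
have iY : isideal NY := ext_ideal k2 m.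
have NX0 : NX 0 by case: iX.
have NY0 : NY 0 by case: iY.
have NXM : forall a z, NX z -> NX (a * z) by case: iX.
have NYM : forall a z, NY z -> NY (a * z) by case: iY.
pose PG := fun G : Y * X -> Prop =>
  [/\ (forall p q, G p -> G q -> G (p.1 + q.1, p.2 + q.2)),
   (forall a p, G p -> G (k2 a * p.1, k1 a * p.2)),
   (forall a y, m a -> G (k2 a * y, 0)),
   (forall z, NX z -> G (0, z)) &
   (forall z, G (0, z) -> NX z)].
pose G0 := fun p : Y * X => exists a z w, [/\ NY z, NX w & p = (k2 a + z, k1 a + w)].
have PG0 : PG G0.
  split.
  - move=> p q [a [z [w [hz hw ->]]]] [a' [z' [w' [hz' hw' ->]]]].
    exists (a + a'), (z + z'), (w + w'); split; [exact: ideal_add|exact: ideal_add|].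
    by rewrite /= !rmorphD; congr pair; ring.
  - move=> b p [a [z [w [hz hw ->]]]]; exists (b * a), (k2 b * z), (k1 b * w); split.
    + exact: NYM.
    + exact: NXM.
    by rewrite /= !rmorphM; congr pair; ring.
  - move=> a y ma; exists 0, (k2 a * y), 0; split => //; first exact: ext_gen.
    by rewrite !rmorph0 !add0r.
  - move=> z hz; exists 0, 0, z; split => //.
    by rewrite !rmorph0 !add0r.
  - move=> z [a [z' [w [hz' hw [e1 e2]]]]].
    have : NY (k2 a) by move/eqP: e1; rewrite eq_sym addr_eq0 => /eqP ->; exact: ideal_opp.
    move/(extY_A hm) => ma.
    have := ext_gen k1 1 ma; rewrite mulr1 => hka.
    by rewrite e2; exact: ideal_add.
have hch : forall F : (Y * X -> Prop) -> Prop, (forall J, F J -> PG J) ->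
     (forall J K, F J -> F K -> (forall t, J t -> K t) \/ (forall t, K t -> J t)) ->
     (exists J, F J) -> PG (fun t => exists J, F J /\ J t).
  move=> F hF htot [J0 FJ0]; split.
  - move=> p q [J [FJ Jp]] [K [FK Kq]].
    case: (htot _ _ FJ FK) => sub.
      by exists K; split => //; case: (hF _ FK) => hS _ _ _ _; apply: hS => //; apply: sub.
    by exists J; split => //; case: (hF _ FJ) => hS _ _ _ _; apply: hS => //; apply: sub.
  - move=> a p [J [FJ Jp]]; exists J; split => //.
    by case: (hF _ FJ) => _ hS _ _ _; apply: hS.
  - move=> a y ma; exists J0; split => //.
    by case: (hF _ FJ0) => _ _ hS _ _; apply: hS.
  - move=> z hz; exists J0; split => //.
    by case: (hF _ FJ0) => _ _ _ hS _; apply: hS.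
  - move=> z [J [FJ Jz]].
    by case: (hF _ FJ) => _ _ _ _ hS; apply: hS.
have [M [PM G0M maxM]] := zorn_pred PG0 hch.
have [hS hSc hmY hmX hfun] := PM.
have Gsub : forall p q, M p -> M q -> M (p.1 - q.1, p.2 - q.2).
  move=> p q hp hq; have := hSc (-1) _ hq; rewrite !rmorphN1 !mulN1r => hq'.
  exact: (hS _ _ hp hq').
have tot : forall y, exists z, M (y, z).
  move=> y0; apply: contrapT => ny.
  pose G' := fun p : Y * X => exists u a, M (u, p.2) /\ p.1 = u + k2 a * y0.
  have PG' : PG G'.
    split.
    - move=> p q [u [a [hu e]]] [u' [a' [hu' e']]]; exists (u + u'), (a + a'); split.
        exact: (hS (u, p.2) (u', q.2)).
      by rewrite /= e e' rmorphD; ring.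
    - move=> b p [u [a [hu e]]]; exists (k2 b * u), (b * a); split.
        exact: (hSc b (u, p.2)).
      by rewrite /= e rmorphM; ring.
    - move=> a y ma; exists (k2 a * y), 0; split; first exact: hmY.
      by rewrite rmorph0 mul0r addr0.
    - move=> z hz; exists 0, 0; split; first exact: hmX.
      by rewrite rmorph0 mul0r addr0.
    - move=> z [u [a [hu /= e]]].
      have [ma|na] := pselect (m a).
        apply: hfun; have := hS _ _ hu (hmY a y0 ma).
        by rewrite /= -e addr0.
      exfalso; apply: ny; have [a' ha'] := fl a na.
      have h1 := hSc a' _ hu.
      have h2 := hmY _ y0 ha'.
      have := Gsub _ _ h2 h1 => /=.
      move/eqP: e; rewrite eq_sym addr_eq0 => /eqP eu.
      rewrite eu rmorphB rmorph1 rmorphM.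
      have -> : (1 - k2 a * k2 a') * y0 - k2 a' * - (k2 a * y0) = y0 by ring.
      by move=> h; exists (0 - k1 a' * z).
  have sub : forall p, M p -> G' p.
    by move=> [p1 p2] hp; exists p1, 0; split => //; rewrite rmorph0 mul0r addr0.
  apply: ny; exists 0; apply: (maxM G' PG' sub (y0, 0)).
  exists 0, 1; split; first exact: hmX.
  by rewrite rmorph1 mul1r add0r.
pose f y := proj1_sig (cid (tot y)).
have hf : forall y, M (y, f y) := fun y => proj2_sig (cid (tot y)).
exists NX, f; split.
  split => //.
  - move=> y z; apply: hfun.
    have := Gsub _ _ (Gsub _ _ (hf (y + z)) (hf y)) (hf z) => /=.
    by rewrite (_ : y + z - y - z = 0) //; ring.
  - move=> a y; apply: hfun.
    have := Gsub _ _ (hf (k2 a * y)) (hSc a _ (hf y)) => /=.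
    by rewrite subrr.
move=> h; apply: nmx.
have g01 : G0 (1, 1) by exists 1, 0, 0; split => //; rewrite !rmorph1 !addr0.
have h1 : NX (f 1 - 1).
  apply: hfun; have := Gsub _ _ (hf 1) (G0M _ g01) => /=.
  by rewrite subrr.
have := ideal_add iX h (ideal_opp iX (NXM x _ h1)).
by rewrite (_ : x * f 1 + - (x * (f 1 - 1)) = x) //; ring.
Qed.

End FL.

Section Gen2.
Variables (A X Y : comPzRingType) (k1 : {rmorphism A -> X}) (k2 : {rmorphism A -> Y}).

Lemma R1_add2 y z : R1 k1 k2 [:: (1, y + z)] [:: (1, y); (1, z)].
Proof.
move=> N f [hN hD _]; rewrite /ev !big_cons !big_nil /= !mul1r !addr0.
by rewrite opprD addrA.
Qed.

Lemma R1_sl a : R1 k1 k2 [:: (k1 a, 1)] [:: (1, k2 a)].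
Proof.
move=> N f [hN _ hS]; rewrite /ev !big_cons !big_nil /= !addr0 mul1r.
have := ideal_opp hN (hS a 1); by rewrite mulr1 opprB.
Qed.

End Gen2.

Section Tensor.
Variables (A B C : comPzRingType) (h1 : {rmorphism A -> B}) (h2 : {rmorphism A -> C}).

Definition tequiv (s t : seq (B * C)) := R1 h1 h2 s t /\ R1 h2 h1 (swap s) (swap t).
Definition teq (s t : seq (B * C)) := `[< tequiv s t >].

Lemma teq_is_equiv : equiv_class_of teq.
Proof.
split.
- by move=> s; apply/asboolP; split; apply: R1_refl.
- by move=> s t; apply/asboolP/asboolP => [] [h h']; split; apply: R1_sym.
- move=> t s u /asboolP [h1' h2'] /asboolP [h3 h4]; apply/asboolP; split.
    exact: R1_trans h1' h3.
  exact: R1_trans h2' h4.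
Qed.

Canonical teq_equiv := EquivRelPack teq_is_equiv.
Canonical teq_encModRel := defaultEncModRel teq.

Definition tens := {eq_quot teq}.
HB.instance Definition _ : EqQuotient (seq (B * C)) teq tens := EqQuotient.on tens.
HB.instance Definition _ := Choice.on tens.

Lemma eqT s t : tequiv s t -> \pi_tens s = \pi_tens t.
Proof. by move=> h; apply/eqP; rewrite piE; apply/asboolP. Qed.

Lemma eqT_inv s t : \pi_tens s = \pi_tens t -> tequiv s t.
Proof. by move/eqP; rewrite piE => /asboolP. Qed.

Lemma reprT s : tequiv (repr (\pi_tens s)) s.
Proof. by apply: eqT_inv; rewrite reprK. Qed.

Lemma tequiv_exact s t : (forall f, ev f s = ev f t) ->
  (forall g, ev g (swap s) = ev g (swap t)) -> tequiv s t.
Proof. by move=> h h'; split; apply: R1_exact. Qed.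

Lemma tequiv_cat s s' t t' : tequiv s s' -> tequiv t t' -> tequiv (s ++ t) (s' ++ t').
Proof.
move=> [a a'] [b b']; split; first exact: R1_cat.
by rewrite !swap_cat; exact: R1_cat.
Qed.

Lemma tequiv_nfst s t : tequiv s t -> tequiv (nfst s) (nfst t).
Proof.
move=> [a a']; split; first exact: R1_nfst.
rewrite !swap_nfst.
exact (R1_trans (R1_nsnd (k1:=h2) (k2:=h1) (swap s)) (R1_trans (R1_nfst a') (R1_sym (R1_nsnd (k1:=h2) (k2:=h1) (swap t))))).
Qed.

Lemma tequiv_tmulC s t : tequiv (tmul s t) (tmul t s).
Proof.
apply: tequiv_exact => f; first exact: ev_tmulC.
by rewrite !swap_tmul ev_tmulC.
Qed.

Lemma tequiv_tmul s s' t t' : tequiv s s' -> tequiv t t' -> tequiv (tmul s t) (tmul s' t').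
Proof.
have L : forall s s' t, tequiv s s' -> tequiv (tmul s t) (tmul s' t).
  move=> x x' y [a a']; split; first exact: R1_tmul.
  by rewrite !swap_tmul; exact: R1_tmul.
move=> hs ht; have [e1 e1'] := L _ _ t hs.
have [e2 e2'] := L _ _ s' ht.
have [c1 c1'] := tequiv_tmulC s' t; have [c2 c2'] := tequiv_tmulC t' s'.
split.
  exact (R1_trans e1 (R1_trans c1 (R1_trans e2 c2))).
exact (R1_trans e1' (R1_trans c1' (R1_trans e2' c2'))).
Qed.

Definition tzero : tens := lift_cst tens [::].
Definition tadd := lift_op2 tens cat.
Definition topp := lift_op1 tens (@nfst B C).
Definition tone : tens := lift_cst tens [:: (1, 1)].
Definition tmulq := lift_op2 tens (@tmul B C).

Canonical pi_tzero_morph := PiConst tzero.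
Canonical pi_tone_morph := PiConst tone.

Lemma tequiv_sym s t : tequiv s t -> tequiv t s.
Proof. by case=> a b; split; apply: R1_sym. Qed.

Lemma reprT' s : tequiv s (repr (\pi_tens s)).
Proof. exact/tequiv_sym/reprT. Qed.

Lemma pi_tadd : {morph \pi_tens : x y / x ++ y >-> tadd x y}.
Proof. by move=> x y /=; unlock tadd; apply: eqT; apply: tequiv_cat; apply: reprT'. Qed.
Canonical pi_tadd_morph := PiMorph2 pi_tadd.

Lemma pi_topp : {morph \pi_tens : x / nfst x >-> topp x}.
Proof. by move=> x /=; unlock topp; apply: eqT; apply: tequiv_nfst; apply: reprT'. Qed.
Canonical pi_topp_morph := PiMorph1 pi_topp.

Lemma pi_tmul : {morph \pi_tens : x y / tmul x y >-> tmulq x y}.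
Proof. by move=> x y /=; unlock tmulq; apply: eqT; apply: tequiv_tmul; apply: reprT'. Qed.
Canonical pi_tmul_morph := PiMorph2 pi_tmul.

Lemma taddA : associative tadd.
Proof. by move=> x y z; rewrite -[x]reprK -[y]reprK -[z]reprK !piE catA. Qed.

Lemma taddC : commutative tadd.
Proof.
move=> x y; rewrite -[x]reprK -[y]reprK !piE; apply: eqT.
by apply: tequiv_exact => f; rewrite ?swap_cat !ev_cat addrC.
Qed.

Lemma tadd0 : left_id tzero tadd.
Proof. by move=> x; rewrite -[x]reprK !piE. Qed.

Lemma taddN : left_inverse tzero topp tadd.
Proof.
move=> x; rewrite -[x]reprK !piE; apply: eqT; set s := repr x; split.
  by apply: R1_exact => f; rewrite ev_cat ev_nfst addNr /ev big_nil.
rewrite swap_cat swap_nfst /=.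
apply (R1_trans (R1_cat (R1_nsnd (k1:=h2) (k2:=h1) (swap s)) (R1_refl (swap s)))).
by apply: R1_exact => f; rewrite ev_cat ev_nfst addNr /ev big_nil.
Qed.

HB.instance Definition _ := GRing.isZmodule.Build tens taddA taddC tadd0 taddN.

Lemma tmulA : associative tmulq.
Proof.
move=> x y z; rewrite -[x]reprK -[y]reprK -[z]reprK !piE; apply: eqT.
by apply: tequiv_exact => f; rewrite ?swap_tmul ev_tmulA.
Qed.

Lemma tmulC : commutative tmulq.
Proof.
by move=> x y; rewrite -[x]reprK -[y]reprK !piE; apply: eqT; apply: tequiv_tmulC.
Qed.

Lemma tmul1 : left_id tone tmulq.
Proof.
move=> x; rewrite -[x]reprK !piE; apply: eqT.
by apply: tequiv_exact => f; rewrite ?swap_tmul ev_tmul1.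
Qed.

Lemma tmulDl : left_distributive tmulq tadd.
Proof.
by move=> x y z; rewrite -[x]reprK -[y]reprK -[z]reprK !piE tmul_catl.
Qed.

HB.instance Definition _ := GRing.Zmodule_isComPzRing.Build tens tmulA tmulC tmul1 tmulDl.

End Tensor.

Section Maps.
Variables (A B C : comPzRingType) (h1 : {rmorphism A -> B}) (h2 : {rmorphism A -> C}).
Local Notation T := (tens h1 h2).

Lemma piT_add s t : \pi_T s + \pi_T t = \pi_T (s ++ t).
Proof. by rewrite pi_tadd. Qed.
Lemma piT_opp s : - \pi_T s = \pi_T (nfst s).
Proof. by rewrite pi_topp. Qed.
Lemma piT_mul s t : \pi_T s * \pi_T t = \pi_T (tmul s t).
Proof. by rewrite pi_tmul. Qed.
Lemma piT_1 : 1 = \pi_T [:: (1, 1)].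
Proof. by rewrite /GRing.one /= /tone; unlock. Qed.

Definition gB (b : B) : T := \pi_T [:: (b, 1)].
Definition gC (c : C) : T := \pi_T [:: (1, c)].

Lemma gB_zmod : zmod_morphism gB.
Proof.
move=> x y; rewrite /gB piT_opp piT_add; apply: eqT; split.
  by apply: R1_exact => f; rewrite /ev !big_cons !big_nil /= !addr0 mulrBl mulNr.
exact: R1_add2.
Qed.

Lemma gB_monoid : monoid_morphism gB.
Proof.
split; first by rewrite /gB piT_1.
by move=> x y; rewrite /gB piT_mul /tmul /= mulr1.
Qed.

Lemma gC_zmod : zmod_morphism gC.
Proof.
move=> x y; rewrite /gC piT_opp piT_add; apply: eqT; split.
  exact (R1_trans (R1_add2 (k1:=h1) (k2:=h2) x (- y))
    (R1_cat (R1_refl [:: (1, x)]) (R1_nsnd [:: (1, y)]))).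
have e1 : R1 h2 h1 [:: (x - y, 1)] [:: (x, 1); (- y, 1)].
  by apply: R1_exact => f; rewrite /ev !big_cons !big_nil /= !addr0 mulrBl mulNr.
exact (R1_trans e1 (R1_cat (R1_refl [:: (x, 1)]) (R1_sym (R1_nsnd [:: (y, 1)])))).
Qed.

Lemma gC_monoid : monoid_morphism gC.
Proof.
split; first by rewrite /gC piT_1.
by move=> x y; rewrite /gC piT_mul /tmul /= mulr1.
Qed.

Lemma gBC a : gB (h1 a) = gC (h2 a).
Proof.
rewrite /gB /gC; apply: eqT; split; first exact: R1_sl.
exact: (R1_sym (R1_sl (k1:=h2) (k2:=h1) a)).
Qed.

Lemma gB_inj : vn_regular A -> injective h2 -> injective gB.
Proof.
move=> hA inj2 x y /eqT_inv [h _]; apply/eqP; rewrite -subr_eq0; apply/negPn/negP => nz.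
have [N [f [hf nN]]] := FL h1 hA inj2 nz; apply: nN.
have := h N f hf; rewrite /ev !big_cons !big_nil /= !addr0.
by rewrite mulrBl.
Qed.

Lemma gC_inj : vn_regular A -> injective h1 -> injective gC.
Proof.
move=> hA inj1 x y /eqT_inv [_ h]; apply/eqP; rewrite -subr_eq0; apply/negPn/negP => nz.
have [N [f [hf nN]]] := FL h2 hA inj1 nz; apply: nN.
have := h N f hf; rewrite /ev !big_cons !big_nil /= !addr0.
by rewrite mulrBl.
Qed.

End Maps.

Section NilQ.
Variable R : comPzRingType.

Definition nilp (x : R) := exists n, x ^+ n = 0.

Lemma expr_ge0 (x : R) n m : x ^+ n = 0 -> (n <= m)%N -> x ^+ m = 0.
Proof. by move=> hx hnm; rewrite -(subnK hnm) exprD hx mulr0. Qed.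

Lemma nilpD x y : nilp x -> nilp y -> nilp (x + y).
Proof.
move=> [n hn] [k hk]; exists (n + k)%N; rewrite exprDn big1 // => [[i /= hi]] _.
case: (leqP k i) => h.
  by rewrite (expr_ge0 hk h) mulr0 mul0rn.
rewrite (@expr_ge0 x n) ?mul0r ?mul0rn //.
lia.
Qed.

Lemma nilpN x : nilp x -> nilp (- x).
Proof. by move=> [n hn]; exists n; rewrite exprNn hn mulr0. Qed.

Lemma nilpM a x : nilp x -> nilp (a * x).
Proof. by move=> [n hn]; exists n; rewrite exprMn hn mulr0. Qed.

Definition neq (x y : R) := `[< nilp (x - y) >].

Lemma neq_is_equiv : equiv_class_of neq.
Proof.
split.
- by move=> x; apply/asboolP; exists 1%N; rewrite subrr expr1.
- by move=> x y; apply/asboolP/asboolP => /nilpN; rewrite opprB.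
- move=> y x z /asboolP h1 /asboolP h2; apply/asboolP.
  by have := nilpD h1 h2; rewrite addrA subrK.
Qed.

Canonical neq_equiv := EquivRelPack neq_is_equiv.
Canonical neq_encModRel := defaultEncModRel neq.

Definition NQ := {eq_quot neq}.
HB.instance Definition _ : EqQuotient R neq NQ := EqQuotient.on NQ.
HB.instance Definition _ := Choice.on NQ.

Lemma eqN x y : nilp (x - y) -> \pi_NQ x = \pi_NQ y.
Proof. by move=> h; apply/eqP; rewrite piE; apply/asboolP. Qed.

Lemma eqN_inv x y : \pi_NQ x = \pi_NQ y -> nilp (x - y).
Proof. by move/eqP; rewrite piE => /asboolP. Qed.

Lemma reprN x : nilp (x - repr (\pi_NQ x)).
Proof. by apply: eqN_inv; rewrite reprK. Qed.

Definition nzero : NQ := lift_cst NQ 0.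
Definition nadd := lift_op2 NQ +%R.
Definition nopp := lift_op1 NQ -%R.
Definition none : NQ := lift_cst NQ 1.
Definition nmul := lift_op2 NQ *%R.

Canonical pi_nzero_morph := PiConst nzero.
Canonical pi_none_morph := PiConst none.

Lemma pi_nadd : {morph \pi_NQ : x y / x + y >-> nadd x y}.
Proof.
move=> x y /=; unlock nadd; apply: eqN.
rewrite (_ : x + y - _ = (x - repr (\pi_NQ x)) + (y - repr (\pi_NQ y))); last by ring.
by apply: nilpD; apply: reprN.
Qed.
Canonical pi_nadd_morph := PiMorph2 pi_nadd.

Lemma pi_nopp : {morph \pi_NQ : x / - x >-> nopp x}.
Proof.
move=> x /=; unlock nopp; apply: eqN.
rewrite (_ : - x - _ = - (x - repr (\pi_NQ x))); last by ring.
by apply: nilpN; apply: reprN.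
Qed.
Canonical pi_nopp_morph := PiMorph1 pi_nopp.

Lemma pi_nmul : {morph \pi_NQ : x y / x * y >-> nmul x y}.
Proof.
move=> x y /=; unlock nmul; apply: eqN.
rewrite (_ : x * y - _ = y * (x - repr (\pi_NQ x)) + repr (\pi_NQ x) * (y - repr (\pi_NQ y))); last by ring.
by apply: nilpD; apply: nilpM; apply: reprN.
Qed.
Canonical pi_nmul_morph := PiMorph2 pi_nmul.

Lemma naddA : associative nadd.
Proof. by move=> x y z; rewrite -[x]reprK -[y]reprK -[z]reprK !piE addrA. Qed.
Lemma naddC : commutative nadd.
Proof. by move=> x y; rewrite -[x]reprK -[y]reprK !piE addrC. Qed.
Lemma nadd0 : left_id nzero nadd.
Proof. by move=> x; rewrite -[x]reprK !piE add0r. Qed.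
Lemma naddN : left_inverse nzero nopp nadd.
Proof. by move=> x; rewrite -[x]reprK !piE addNr. Qed.

HB.instance Definition _ := GRing.isZmodule.Build NQ naddA naddC nadd0 naddN.

Lemma nmulA : associative nmul.
Proof. by move=> x y z; rewrite -[x]reprK -[y]reprK -[z]reprK !piE mulrA. Qed.
Lemma nmulC : commutative nmul.
Proof. by move=> x y; rewrite -[x]reprK -[y]reprK !piE mulrC. Qed.
Lemma nmul1 : left_id none nmul.
Proof. by move=> x; rewrite -[x]reprK !piE mul1r. Qed.
Lemma nmulDl : left_distributive nmul nadd.
Proof. by move=> x y z; rewrite -[x]reprK -[y]reprK -[z]reprK !piE mulrDl. Qed.

HB.instance Definition _ := GRing.Zmodule_isComPzRing.Build NQ nmulA nmulC nmul1 nmulDl.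

Lemma piN_add x y : \pi_NQ (x + y) = \pi_NQ x + \pi_NQ y.
Proof. by rewrite pi_nadd. Qed.
Lemma piN_opp x : \pi_NQ (- x) = - \pi_NQ x.
Proof. by rewrite pi_nopp. Qed.
Lemma piN_mul x y : \pi_NQ (x * y) = \pi_NQ x * \pi_NQ y.
Proof. by rewrite pi_nmul. Qed.
Lemma piN_1 : \pi_NQ 1 = 1.
Proof. by rewrite /GRing.one /= /none; unlock. Qed.
Lemma piN_0 : \pi_NQ 0 = 0.
Proof. by rewrite /GRing.zero /= /nzero; unlock. Qed.

Lemma piN_X x n : \pi_NQ (x ^+ n) = \pi_NQ x ^+ n.
Proof. by elim: n => [|n IH]; rewrite ?expr0 ?piN_1 // !exprS piN_mul IH. Qed.

Lemma NQ_reduced : reduced NQ.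
Proof.
move=> q n; rewrite -[q]reprK -piN_X => h.
have [k] := eqN_inv (etrans h (esym piN_0)).
rewrite subr0 -exprM => hk; apply: etrans piN_0; apply: eqN; rewrite subr0.
by exists (n * k)%N.
Qed.

End NilQ.

Section Final.
Variables (A B C : comPzRingType) (h1 : {rmorphism A -> B}) (h2 : {rmorphism A -> C}).

Definition DD := NQ (tens h1 h2).
Definition g1 (b : B) : DD := \pi_DD (gB h1 h2 b).
Definition g2 (c : C) : DD := \pi_DD (gC h1 h2 c).

Lemma g1_zmod : zmod_morphism g1.
Proof. by move=> x y; rewrite /g1 gB_zmod piN_add piN_opp. Qed.
Lemma g1_monoid : monoid_morphism g1.
Proof.
split; first by rewrite /g1 (gB_monoid h1 h2).1 piN_1.
by move=> x y; rewrite /g1 (gB_monoid h1 h2).2 piN_mul.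
Qed.
Lemma g2_zmod : zmod_morphism g2.
Proof. by move=> x y; rewrite /g2 gC_zmod piN_add piN_opp. Qed.
Lemma g2_monoid : monoid_morphism g2.
Proof.
split; first by rewrite /g2 (gC_monoid h1 h2).1 piN_1.
by move=> x y; rewrite /g2 (gC_monoid h1 h2).2 piN_mul.
Qed.

HB.instance Definition _ := GRing.isZmodMorphism.Build B (tens h1 h2) (gB h1 h2) (@gB_zmod _ _ _ h1 h2).
HB.instance Definition _ := GRing.isMonoidMorphism.Build B (tens h1 h2) (gB h1 h2) (@gB_monoid _ _ _ h1 h2).
HB.instance Definition _ := GRing.isZmodMorphism.Build C (tens h1 h2) (gC h1 h2) (@gC_zmod _ _ _ h1 h2).
HB.instance Definition _ := GRing.isMonoidMorphism.Build C (tens h1 h2) (gC h1 h2) (@gC_monoid _ _ _ h1 h2).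
HB.instance Definition _ := GRing.isZmodMorphism.Build B DD g1 g1_zmod.
HB.instance Definition _ := GRing.isMonoidMorphism.Build B DD g1 g1_monoid.
HB.instance Definition _ := GRing.isZmodMorphism.Build C DD g2 g2_zmod.
HB.instance Definition _ := GRing.isMonoidMorphism.Build C DD g2 g2_monoid.

End Final.

Local Close Scope quotient_scope.

Theorem mainTheorem11 (A : comPzRingType) (hA : vn_regular A)
  (B C : comPzRingType) (hB : reduced B) (hC : reduced C)
  (h1 : {rmorphism A -> B}) (h2 : {rmorphism A -> C})
  (inj1 : injective h1) (inj2 : injective h2) :
  exists (D : comPzRingType) (g1 : {rmorphism B -> D}) (g2 : {rmorphism C -> D}),
    [/\ reduced D, injective g1, injective g2 & forall a : A, g1 (h1 a) = g2 (h2 a)].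
Proof.
exists (DD h1 h2), (g1 h1 h2 : {rmorphism B -> DD h1 h2}), (g2 h1 h2 : {rmorphism C -> DD h1 h2}).
split.
- exact: NQ_reduced.
- move=> x y /= hxy; apply/eqP; rewrite -subr_eq0; apply/eqP.
  have : g1 h1 h2 (x - y) = 0 by rewrite g1_zmod hxy subrr.
  rewrite /g1 -(piN_0 (tens h1 h2)) => /eqN_inv [n]; rewrite subr0 -rmorphXn.
  rewrite -(rmorph0 (gB h1 h2)) => /(gB_inj hA inj2).
  exact: hB.
- move=> x y /= hxy; apply/eqP; rewrite -subr_eq0; apply/eqP.
  have : g2 h1 h2 (x - y) = 0 by rewrite g2_zmod hxy subrr.
  rewrite /g2 -(piN_0 (tens h1 h2)) => /eqN_inv [n]; rewrite subr0 -rmorphXn.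
  rewrite -(rmorph0 (gC h1 h2)) => /(gC_inj hA inj1).
  exact: hC.
- by move=> a /=; rewrite /g1 /g2 gBC.
Qed.
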